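(* Let $(\mathscr{A},\mathscr{E})$ and $(\mathscr{B},\mathscr{F})$ be exact categories (in the sense of Quillen) and let $L : \mathscr{A} \rightarrow \mathscr{B}$ be an exact functor. Suppose $\mathscr{F}' \subseteq \mathscr{F}$ is a subfamily of conflations such that $(\mathscr{B},\mathscr{F}')$ is again an exact category. Define $\mathscr{E}' = \{ s \in \mathscr{E} : Ls \in \mathscr{F}' \}$. Then $(\mathscr{A},\mathscr{E}')$ is an exact category.
   Context: An exact category $(\mathscr{A},\mathscr{E})$ is an additive category $\mathscr{A}$ together with a class $\mathscr{E}$ of kernel–cokernel pairs (short exact sequences, ''conflations'') $X \rightarrowtail Y \twoheadrightarrow Z$, closed under isomorphism, satisfying Quillen's axioms (equivalently Keller's minimal axioms: identity of $0$ is a deflation; composites of deflations are deflations; pullbacks of deflations along arbitrary morphisms exist and are deflations; dually pushouts of inflations exist and are inflations). An exact functor $L:(\mathscr{A},\mathscr{E})\to(\mathscr{B},\mathscr{F})$ is an additive functor sending sequences in $\mathscr{E}$ to sequences in $\mathscr{F}$. For $s\in\mathscr{E}$, $Ls$ denotes the image sequence. *)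

(* Defs.v *)
From HB Require Import structures.
From mathcomp Require Import all_boot all_algebra.
Set Implicit Arguments. Unset Strict Implicit. Unset Printing Implicit Defensive.
Import GRing.Theory.
Local Open Scope ring_scope.

(* Preadditive category; composition is written in diagrammatic order:
   comp f g = "first f, then g" = g o f. *)
Record PreAddCat := {
  Ob :> Type;
  Mor : Ob -> Ob -> zmodType;
  idm : forall X, Mor X X;
  comp : forall X Y Z, Mor X Y -> Mor Y Z -> Mor X Z;
  compA : forall X Y Z W (f : Mor X Y) (g : Mor Y Z) (h : Mor Z W),
      comp (comp f g) h = comp f (comp g h);
  comp1m : forall X Y (f : Mor X Y), comp (idm X) f = f;
  compm1 : forall X Y (f : Mor X Y), comp f (idm Y) = f;
  compDl : forall X Y Z (f f' : Mor X Y) (g : Mor Y Z),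
      comp (f + f') g = comp f g + comp f' g;
  compDr : forall X Y Z (f : Mor X Y) (g g' : Mor Y Z),
      comp f (g + g') = comp f g + comp f g'
}.
Arguments Mor {p} _ _.
Arguments idm {p}.
Arguments comp {p X Y Z}.

Notation "f ';;' g" := (comp f g) (at level 40, left associativity).

Section Defs.
Variable C : PreAddCat.

Definition is_zero_object (Z : C) : Prop :=
  (forall X (f : Mor Z X), f = 0) /\ (forall X (f : Mor X Z), f = 0).

Definition is_biproduct (X Y S : C) (i1 : Mor X S) (i2 : Mor Y S)
    (p1 : Mor S X) (p2 : Mor S Y) : Prop :=
  [/\ i1 ;; p1 = idm X, i2 ;; p2 = idm Y, i1 ;; p2 = 0, i2 ;; p1 = 0
    & p1 ;; i1 + p2 ;; i2 = idm S].

Definition is_additive : Prop :=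
  (exists Z : C, is_zero_object Z) /\
  (forall X Y : C, exists S (i1 : Mor X S) (i2 : Mor Y S) (p1 : Mor S X)
     (p2 : Mor S Y), is_biproduct i1 i2 p1 p2).

Definition is_iso (X Y : C) (f : Mor X Y) : Prop :=
  exists g : Mor Y X, f ;; g = idm X /\ g ;; f = idm Y.

Definition is_kernel (X Y Z : C) (f : Mor X Y) (g : Mor Y Z) : Prop :=
  f ;; g = 0 /\
  forall W (h : Mor W Y), h ;; g = 0 -> exists! u : Mor W X, u ;; f = h.

Definition is_cokernel (X Y Z : C) (f : Mor X Y) (g : Mor Y Z) : Prop :=
  f ;; g = 0 /\
  forall W (h : Mor Y W), f ;; h = 0 -> exists! u : Mor Z W, g ;; u = h.

Definition is_pullback (P Y Z' Z : C) (a : Mor P Y) (b : Mor P Z')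
    (g : Mor Y Z) (h : Mor Z' Z) : Prop :=
  a ;; g = b ;; h /\
  forall W (u : Mor W Y) (v : Mor W Z'), u ;; g = v ;; h ->
    exists! w : Mor W P, w ;; a = u /\ w ;; b = v.

Definition is_pushout (X Y X' P : C) (f : Mor X Y) (h : Mor X X')
    (a : Mor X' P) (b : Mor Y P) : Prop :=
  f ;; b = h ;; a /\
  forall W (u : Mor Y W) (v : Mor X' W), f ;; u = h ;; v ->
    exists! w : Mor P W, b ;; w = u /\ a ;; w = v.

Definition SeqClass := forall X Y Z : C, Mor X Y -> Mor Y Z -> Prop.

Definition deflation (E : SeqClass) (Y Z : C) (g : Mor Y Z) : Prop :=
  exists X (f : Mor X Y), E X Y Z f g.

Definition inflation (E : SeqClass) (X Y : C) (f : Mor X Y) : Prop :=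
  exists Z (g : Mor Y Z), E X Y Z f g.

Definition is_exact_structure (E : SeqClass) : Prop :=
  [/\
      forall X Y Z (f : Mor X Y) (g : Mor Y Z),
        E X Y Z f g -> is_kernel f g /\ is_cokernel f g,
      forall X Y Z (f : Mor X Y) (g : Mor Y Z) X' Y' Z' (f' : Mor X' Y')
        (g' : Mor Y' Z') (u : Mor X X') (v : Mor Y Y') (w : Mor Z Z'),
        is_iso u -> is_iso v -> is_iso w ->
        f ;; v = u ;; f' -> g ;; w = v ;; g' ->
        E X Y Z f g -> E X' Y' Z' f' g',
      (forall Z : C, is_zero_object Z -> deflation E (idm Z)) /\
      (forall Z : C, is_zero_object Z -> inflation E (idm Z)),
      (forall X Y Z (f : Mor X Y) (g : Mor Y Z),
         deflation E f -> deflation E g -> deflation E (f ;; g)) /\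
      (forall X Y Z (f : Mor X Y) (g : Mor Y Z),
         inflation E f -> inflation E g -> inflation E (f ;; g))
    &
      (forall X Y X' (f : Mor X Y) (h : Mor X X'), inflation E f ->
         exists P (a : Mor X' P) (b : Mor Y P),
           is_pushout f h a b /\ inflation E a) /\
      (forall Y Z Z' (g : Mor Y Z) (h : Mor Z' Z), deflation E g ->
         exists P (a : Mor P Y) (b : Mor P Z'),
           is_pullback a b g h /\ deflation E b)].

End Defs.

Definition is_exact_category (C : PreAddCat) (E : SeqClass C) : Prop :=
  is_additive C /\ is_exact_structure E.

Record AddFunctor (A B : PreAddCat) := {
  Fob :> A -> B;
  Fmap : forall X Y : A, Mor X Y -> Mor (Fob X) (Fob Y);
  Fmap_id : forall X, Fmap (idm X) = idm (Fob X);
  Fmap_comp : forall X Y Z (f : Mor X Y) (g : Mor Y Z),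
      Fmap (f ;; g) = Fmap f ;; Fmap g;
  Fmap_add : forall X Y (f f' : Mor X Y), Fmap (f + f') = Fmap f + Fmap f'
}.
Arguments Fmap {A B} a {X Y}.

Definition is_exact_functor (A B : PreAddCat) (E : SeqClass A) (F : SeqClass B)
    (L : AddFunctor A B) : Prop :=
  forall X Y Z (f : Mor X Y) (g : Mor Y Z),
    E X Y Z f g -> F (L X) (L Y) (L Z) (Fmap L f) (Fmap L g).

Definition preimage_class (A B : PreAddCat) (E : SeqClass A) (F' : SeqClass B)
    (L : AddFunctor A B) : SeqClass A :=
  fun X Y Z f g => E X Y Z f g /\ F' (L X) (L Y) (L Z) (Fmap L f) (Fmap L g).

(* Main.v *)
Require Import Defs.
From mathcomp Require Import all_boot all_algebra.
Set Implicit Arguments. Unset Strict Implicit. Unset Printing Implicit Defensive.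
Import GRing.Theory.
Local Open Scope ring_scope.
Set Bullet Behavior "Strict Subproofs".

Section Gen.
Variable C : PreAddCat.

Lemma comp0m (X Y Z : C) (g : Mor Y Z) : (0 : Mor X Y) ;; g = 0.
Proof.
have H := compDl (0 : Mor X Y) 0 g. rewrite addr0 in H.
by apply: (addrI ((0 : Mor X Y) ;; g)); rewrite -H addr0.
Qed.

Lemma compm0 (X Y Z : C) (f : Mor X Y) : f ;; (0 : Mor Y Z) = 0.
Proof.
have H := compDr f (0 : Mor Y Z) 0. rewrite addr0 in H.
by apply: (addrI (f ;; (0 : Mor Y Z))); rewrite -H addr0.
Qed.

Lemma compNm (X Y Z : C) (f : Mor X Y) (g : Mor Y Z) : (- f) ;; g = - (f ;; g).
Proof. by apply: (addrI (f ;; g)); rewrite -compDl !addrN comp0m. Qed.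

Lemma compmN (X Y Z : C) (f : Mor X Y) (g : Mor Y Z) : f ;; (- g) = - (f ;; g).
Proof. by apply: (addrI (f ;; g)); rewrite -compDr !addrN compm0. Qed.

Lemma iso_id (X : C) : is_iso (idm X).
Proof. by exists (idm X); rewrite comp1m. Qed.

Lemma ker_iso (K1 K2 Y Z : C) (k1 : Mor K1 Y) (k2 : Mor K2 Y) (g : Mor Y Z) :
  is_kernel k1 g -> is_kernel k2 g -> exists u : Mor K2 K1, is_iso u /\ u ;; k1 = k2.
Proof.
case=> e1 H1 [e2 H2].
case: (H1 _ k2 e2) => u [Hu _].
case: (H2 _ k1 e1) => v [Hv _].
exists u; split=> //; exists v; split.
- case: (H2 _ k2 e2) => w [_ Hw].
  have -> : u ;; v = w by symmetry; apply: Hw; rewrite Defs.compA Hv Hu.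
  by apply: Hw; rewrite comp1m.
- case: (H1 _ k1 e1) => w [_ Hw].
  have -> : v ;; u = w by symmetry; apply: Hw; rewrite Defs.compA Hu Hv.
  by apply: Hw; rewrite comp1m.
Qed.

Lemma coker_iso (X Y Z1 Z2 : C) (f : Mor X Y) (c1 : Mor Y Z1) (c2 : Mor Y Z2) :
  is_cokernel f c1 -> is_cokernel f c2 -> exists w : Mor Z1 Z2, is_iso w /\ c1 ;; w = c2.
Proof.
case=> e1 H1 [e2 H2].
case: (H1 _ c2 e2) => u [Hu _].
case: (H2 _ c1 e1) => v [Hv _].
exists u; split=> //; exists v; split.
- case: (H1 _ c1 e1) => w [_ Hw].
  have -> : u ;; v = w by symmetry; apply: Hw; rewrite -Defs.compA Hu Hv.
  by apply: Hw; rewrite compm1.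
- case: (H2 _ c2 e2) => w [_ Hw].
  have -> : v ;; u = w by symmetry; apply: Hw; rewrite -Defs.compA Hv Hu.
  by apply: Hw; rewrite compm1.
Qed.

Lemma pushout_iso (X Y X' P P' : C) (f : Mor X Y) (h : Mor X X')
   (a : Mor X' P) (b : Mor Y P) (a' : Mor X' P') (b' : Mor Y P') :
  is_pushout f h a b -> is_pushout f h a' b' ->
  exists phi : Mor P P', is_iso phi /\ a ;; phi = a' /\ b ;; phi = b'.
Proof.
case=> e1 H1 [e2 H2].
case: (H1 _ b' a' e2) => u [[Hu1 Hu2] _].
case: (H2 _ b a e1) => v [[Hv1 Hv2] _].
exists u; split=> //; exists v; split.
- case: (H1 _ b a e1) => w [_ Hw].
  have -> : u ;; v = w by symmetry; apply: Hw; split; rewrite -Defs.compA ?Hu1 ?Hu2 ?Hv1 ?Hv2.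
  by apply: Hw; rewrite !compm1.
- case: (H2 _ b' a' e2) => w [_ Hw].
  have -> : v ;; u = w by symmetry; apply: Hw; split; rewrite -Defs.compA ?Hu1 ?Hu2 ?Hv1 ?Hv2.
  by apply: Hw; rewrite !compm1.
Qed.

Definition iso_closed (E : SeqClass C) :=
      forall X Y Z (f : Mor X Y) (g : Mor Y Z) X' Y' Z' (f' : Mor X' Y')
        (g' : Mor Y' Z') (u : Mor X X') (v : Mor Y Y') (w : Mor Z Z'),
        is_iso u -> is_iso v -> is_iso w ->
        f ;; v = u ;; f' -> g ;; w = v ;; g' ->
        E X Y Z f g -> E X' Y' Z' f' g'.

Definition kc (E : SeqClass C) := forall X Y Z (f : Mor X Y) (g : Mor Y Z),
        E X Y Z f g -> is_kernel f g /\ is_cokernel f g.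

Lemma conf_of_ker (F : SeqClass C) : kc F -> iso_closed F ->
  forall X Y Z (f : Mor X Y) (g : Mor Y Z), is_kernel f g -> deflation F g -> F X Y Z f g.
Proof.
move=> Hkc Hiso X Y Z f g kf [K [k Fk]].
have [u [iu eu]] := ker_iso kf (Hkc _ _ _ _ _ Fk).1.
apply: (Hiso _ _ _ _ _ _ _ _ _ _ u (idm Y) (idm Z) iu (iso_id _) (iso_id _) _ _ Fk).
  by rewrite compm1.
by rewrite compm1 comp1m.
Qed.

Lemma conf_of_coker (F : SeqClass C) : kc F -> iso_closed F ->
  forall X Y Z (f : Mor X Y) (g : Mor Y Z), is_cokernel f g -> inflation F f -> F X Y Z f g.
Proof.
move=> Hkc Hiso X Y Z f g kf [Q [c Fc]].
have [w [iw ew]] := coker_iso (Hkc _ _ _ _ _ Fc).2 kf.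
apply: (Hiso _ _ _ _ _ _ _ _ _ _ (idm X) (idm Y) w (iso_id _) (iso_id _) iw _ _ Fc).
  by rewrite compm1 comp1m.
by rewrite comp1m.
Qed.

Lemma post_iso_infl (E : SeqClass C) : iso_closed E ->
  forall X Y Y' (f : Mor X Y) (phi : Mor Y Y'), inflation E f -> is_iso phi ->
  inflation E (f ;; phi).
Proof.
move=> Hiso X Y Y' f phi [Q [c Ec]] [psi [e1 e2]].
exists Q, (psi ;; c).
apply: (Hiso _ _ _ _ _ _ _ _ _ _ (idm X) phi (idm Q) (iso_id _) _ (iso_id _) _ _ Ec).
- by exists psi.
- by rewrite comp1m.
- by rewrite compm1 -Defs.compA e1 comp1m.
Qed.

Lemma pushout_infl (E : SeqClass C) : iso_closed E ->
  (forall X Y X' (f : Mor X Y) (h : Mor X X'), inflation E f ->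
         exists P (a : Mor X' P) (b : Mor Y P),
           is_pushout f h a b /\ inflation E a) ->
  forall X Y X' P (f : Mor X Y) (h : Mor X X') (a : Mor X' P) (b : Mor Y P),
  inflation E f -> is_pushout f h a b -> inflation E a.
Proof.
move=> Hiso HE2 X Y X' P f h a b If po.
have [P0 [a0 [b0 [po0 I0]]]] := HE2 _ _ _ f h If.
have [phi [iphi [ea _]]] := pushout_iso po0 po.
by rewrite -ea; apply: post_iso_infl.
Qed.


Ltac nrm := rewrite ?compDl ?compDr ?compNm ?compmN ?comp0m ?compm0 ?comp1m ?compm1 -?Defs.compA.

Section Biprod.
Variables (Y X' S : C) (i1 : Mor Y S) (i2 : Mor X' S) (p1 : Mor S Y) (p2 : Mor S X').
Hypothesis Hb : is_biproduct i1 i2 p1 p2.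

Lemma bp11 W (x : Mor W Y) : x ;; i1 ;; p1 = x.
Proof. by case: Hb => e _ _ _ _; rewrite Defs.compA e compm1. Qed.
Lemma bp22 W (x : Mor W X') : x ;; i2 ;; p2 = x.
Proof. by case: Hb => _ e _ _ _; rewrite Defs.compA e compm1. Qed.
Lemma bp12 W (x : Mor W Y) : x ;; i1 ;; p2 = 0.
Proof. by case: Hb => _ _ e _ _; rewrite Defs.compA e compm0. Qed.
Lemma bp21 W (x : Mor W X') : x ;; i2 ;; p1 = 0.
Proof. by case: Hb => _ _ _ e _; rewrite Defs.compA e compm0. Qed.
Lemma bpE : p1 ;; i1 + p2 ;; i2 = idm S.
Proof. by case: Hb. Qed.

Lemma bp_ext W (w w' : Mor S W) : i1 ;; w = i1 ;; w' -> i2 ;; w = i2 ;; w' -> w = w'.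
Proof.
move=> e1 e2; rewrite -(comp1m w) -(comp1m w') -bpE !compDl !Defs.compA.
by rewrite e1 e2.
Qed.

Lemma i1E W (x : Mor Y W) (y : Mor X' W) : i1 ;; (p1 ;; x + p2 ;; y) = x.
Proof. by case: Hb => e11 _ e12 _ _; rewrite compDr -!Defs.compA e11 e12 comp1m comp0m addr0. Qed.
Lemma i2E W (x : Mor Y W) (y : Mor X' W) : i2 ;; (p1 ;; x + p2 ;; y) = y.
Proof. by case: Hb => _ e22 _ e21 _; rewrite compDr -!Defs.compA e22 e21 comp1m comp0m add0r. Qed.

Lemma po_coker X P (f : Mor X Y) (h : Mor X X') (a : Mor X' P) (b : Mor Y P) :
  is_pushout f h a b -> is_cokernel (f ;; i1 - h ;; i2) (p1 ;; b + p2 ;; a).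
Proof.
case=> sq H; split.
  by rewrite compDl compNm !Defs.compA !i1E !i2E sq addrN.
move=> W t Ht.
have fuv : f ;; (i1 ;; t) = h ;; (i2 ;; t).
  move: Ht; rewrite compDl compNm => /eqP; rewrite subr_eq0 => /eqP.
  by rewrite !Defs.compA.
case: (H W (i1 ;; t) (i2 ;; t) fuv) => w [[wb wa] U].
exists w; split.
  rewrite compDl !Defs.compA wb wa -!Defs.compA -compDl bpE comp1m //.
move=> w' Hw'; apply: U; split.
  by rewrite -Hw' -Defs.compA i1E.
by rewrite -Hw' -Defs.compA i2E.
Qed.

Lemma coker_po X P (f : Mor X Y) (h : Mor X X') (a : Mor X' P) (b : Mor Y P) :
  f ;; b = h ;; a -> is_cokernel (f ;; i1 - h ;; i2) (p1 ;; b + p2 ;; a) ->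
  is_pushout f h a b.
Proof.
move=> sq [_ H]; split=> // W u v e.
have Ht : (f ;; i1 - h ;; i2) ;; (p1 ;; u + p2 ;; v) = 0.
  by rewrite compDl compNm !Defs.compA !i1E !i2E e addrN.
case: (H W _ Ht) => w [Hw U].
exists w; split.
  split.
    by rewrite -(i1E b a) Defs.compA Hw i1E.
  by rewrite -(i2E b a) Defs.compA Hw i2E.
by move=> w' [e1 e2]; apply: U; rewrite compDl !Defs.compA e1 e2.
Qed.

End Biprod.

Lemma split_po (K X X' T : C) (j1 : Mor X T) (j2 : Mor X' T) (q1 : Mor T X) (q2 : Mor T X')
  (k : Mor K X') (h : Mor X X') :
  is_biproduct j1 j2 q1 q2 -> is_zero_object K ->
  is_pushout k (0 : Mor K X) (j1 - h ;; j2) j2.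
Proof.
move=> Hb zK; split.
  by rewrite (zK.1 _ (k ;; j2)) (zK.1 _ (0 ;; _)).
move=> W u v _.
exists (q1 ;; (v + h ;; u) + q2 ;; u); split.
  split; first by rewrite (i2E Hb).
  by rewrite compDl compNm !Defs.compA (i1E Hb) (i2E Hb) addrK.
move=> w' [e1 e2].
apply: (bp_ext Hb).
  rewrite (i1E Hb); move: e2; rewrite compDl compNm Defs.compA e1 => /eqP.
  by rewrite subr_eq => /eqP ->.
by rewrite (i2E Hb) e1.
Qed.

Lemma sum_po (X X' Y T S : C) (j1 : Mor X T) (j2 : Mor X' T) (q1 : Mor T X) (q2 : Mor T X')
  (i1 : Mor Y S) (i2 : Mor X' S) (p1 : Mor S Y) (p2 : Mor S X') (f : Mor X Y) :
  is_biproduct j1 j2 q1 q2 -> is_biproduct i1 i2 p1 p2 ->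
  is_pushout f j1 (q1 ;; f ;; i1 + q2 ;; i2) i1.
Proof.
move=> Hj Hi; have Hj' := Hj; case: Hj' => ej11 ej22 ej12 ej21 _; split.
  by rewrite compDr -!Defs.compA ej11 ej12 comp1m comp0m addr0.
move=> W u v e.
exists (p1 ;; u + p2 ;; (j2 ;; v)); split.
  split; first by rewrite (i1E Hi).
  rewrite compDl !Defs.compA (i1E Hi) (i2E Hi) e -!Defs.compA -compDl.
  by rewrite (bpE Hj) comp1m.
move=> w' [e1 e2].
apply: (bp_ext Hi); first by rewrite (i1E Hi) e1.
rewrite (i2E Hi) -e2 -Defs.compA.
by rewrite compDr -!Defs.compA ej21 ej22 comp1m !comp0m add0r.
Qed.

End Gen.

Section Exact.
Variable C : PreAddCat.

Lemma zero_infl (E : SeqClass C) : kc E -> iso_closed E ->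
  (forall Z : C, is_zero_object Z -> deflation E (idm Z)) ->
  (forall Y Z Z' (g : Mor Y Z) (h : Mor Z' Z), deflation E g ->
         exists P (a : Mor P Y) (b : Mor P Z'),
           is_pullback a b g h /\ deflation E b) ->
  forall Z : C, is_zero_object Z ->
  forall B : C, exists K (k : Mor K B), is_zero_object K /\ inflation E k.
Proof.
move=> Hkc Hiso HE0 HE2op Z HZ B.
have zZ : forall X (f : Mor X Z), f = 0 := HZ.2.
case: (HE2op _ _ _ (idm Z) (0 : Mor B Z) (HE0 Z HZ)) => P [a [b [[sq Hpb] [K [k Ek]]]]].
case: (Hpb B 0 (idm B)); first by rewrite compm1 comp1m.
move=> w [[wa wb] _].
have bw : b ;; w = idm P.
  case: (Hpb P a b sq) => w0 [_ U].
  have -> : b ;; w = w0.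
    symmetry; apply: U; split.
      by rewrite Defs.compA wa compm0 (zZ _ a).
    by rewrite Defs.compA wb compm1.
  by apply: U; rewrite !comp1m.
have [kerk _] := Hkc _ _ _ _ _ Ek.
have k0 : k = 0.
  by rewrite -[k]compm1 -bw -Defs.compA kerk.1 comp0m.
have idK : idm K = 0.
  case: kerk => e H; case: (H K k e) => u [_ U].
  have -> : idm K = u by symmetry; apply: U; rewrite comp1m.
  by apply: U; rewrite comp0m k0.
have zK : is_zero_object K.
  split=> X f; first by rewrite -[f]comp1m idK comp0m.
  by rewrite -[f]compm1 idK compm0.
exists K, (k ;; b); split => //.
apply: post_iso_infl => //; first by exists B, b.
by exists w.
Qed.

Lemma pushout_conf (E : SeqClass C) : is_additive C -> is_exact_structure E ->
  forall X Y X' P S (f : Mor X Y) (h : Mor X X') (a : Mor X' P) (b : Mor Y P)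
    (i1 : Mor Y S) (i2 : Mor X' S) (p1 : Mor S Y) (p2 : Mor S X'),
  is_biproduct i1 i2 p1 p2 -> inflation E f -> is_pushout f h a b ->
  E X S P (f ;; i1 - h ;; i2) (p1 ;; b + p2 ;; a).
Proof.
case=> [[Z zZ] Hbp] [Hkc Hiso [HE0 HE0op] [HE1 HE1op] [HE2 HE2op]].
move=> X Y X' P S f h a b i1 i2 p1 p2 Hb If po.
have [K [k [zK Ik]]] := zero_infl Hkc Hiso HE0 HE2op zZ X'.
have [T [j1 [j2 [q1 [q2 Hj]]]]] := Hbp X X'.
have I1 : inflation E (j1 - h ;; j2).
  apply: (pushout_infl Hiso HE2 Ik); exact: split_po Hj zK.
have I2 : inflation E (q1 ;; f ;; i1 + q2 ;; i2).
  exact: (pushout_infl Hiso HE2 If (sum_po f Hj Hb)).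
have I3 := HE1op _ _ _ _ _ I1 I2.
have ecomp : (j1 - h ;; j2) ;; (q1 ;; f ;; i1 + q2 ;; i2) = f ;; i1 - h ;; i2.
  have Hj' := Hj; case: Hj' => ej11 ej22 ej12 ej21 _.
  rewrite compDl compNm !compDr -!Defs.compA ej11 ej12 (bp21 Hj) (bp22 Hj).
  by rewrite comp1m !comp0m addr0 add0r.
rewrite ecomp in I3.
exact: (conf_of_coker Hkc Hiso (po_coker Hb po) I3).
Qed.

End Exact.

Section Fun.
Variables (A B : PreAddCat) (L : AddFunctor A B).

Lemma Fmap0 (X Y : A) : Fmap L (0 : Mor X Y) = 0.
Proof.
have H := Fmap_add L (0 : Mor X Y) 0; rewrite addr0 in H.
by apply: (addrI (Fmap L (0 : Mor X Y))); rewrite -H addr0.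
Qed.

Lemma FmapN (X Y : A) (f : Mor X Y) : Fmap L (- f) = - Fmap L f.
Proof. by apply: (addrI (Fmap L f)); rewrite -Fmap_add !addrN Fmap0. Qed.

Lemma FmapB (X Y : A) (f g : Mor X Y) : Fmap L (f - g) = Fmap L f - Fmap L g.
Proof. by rewrite Fmap_add FmapN. Qed.

Lemma Fmap_iso (X Y : A) (u : Mor X Y) : is_iso u -> is_iso (Fmap L u).
Proof.
by case=> v [e1 e2]; exists (Fmap L v); rewrite -!Fmap_comp e1 e2 !Fmap_id.
Qed.

Lemma Fmap_zero (Z : A) : is_zero_object Z -> is_zero_object (L Z).
Proof.
move=> zZ; have id0 : idm (L Z) = 0 by rewrite -Fmap_id (zZ.1 _ (idm Z)) Fmap0.
split=> X f; first by rewrite -[f]comp1m id0 comp0m.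
by rewrite -[f]compm1 id0 compm0.
Qed.

Lemma Fmap_bp (Y X' S : A) (i1 : Mor Y S) (i2 : Mor X' S) (p1 : Mor S Y) (p2 : Mor S X') :
  is_biproduct i1 i2 p1 p2 ->
  is_biproduct (Fmap L i1) (Fmap L i2) (Fmap L p1) (Fmap L p2).
Proof.
case=> e1 e2 e3 e4 e5; split; rewrite -?Fmap_comp ?e1 ?e2 ?e3 ?e4 ?Fmap_id ?Fmap0 //.
by rewrite -Fmap_add e5 Fmap_id.
Qed.

End Fun.

Definition halfP (C : PreAddCat) (E : SeqClass C) : Prop :=
  (forall Z : C, is_zero_object Z -> deflation E (idm Z)) /\
  (forall X Y Z (f : Mor X Y) (g : Mor Y Z),
         deflation E f -> deflation E g -> deflation E (f ;; g)) /\
  (forall X Y X' (f : Mor X Y) (h : Mor X X'), inflation E f ->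
         exists P (a : Mor X' P) (b : Mor Y P),
           is_pushout f h a b /\ inflation E a).

Lemma half (A B : PreAddCat) (E : SeqClass A) (F F' : SeqClass B)
    (L : AddFunctor A B) :
  is_exact_category E ->
  is_exact_category F ->
  is_exact_functor E F L ->
  (forall X Y Z (f : Mor X Y) (g : Mor Y Z), F' X Y Z f g -> F X Y Z f g) ->
  is_exact_category F' ->
  halfP (preimage_class E F' L).
Proof.
move=> [HAadd HE] [_ HF] HL Hsub [_ HF'].
have HE' := HE; case: HE' => Hkc Hiso [HE0 HE0op] [HE1 HE1op] [HE2 HE2op].
case: HF => HFkc _ _ _ _.
case: HF' => HF'kc HF'iso [HF'0 _] [HF'1 _] [HF'2 _].
split; [|split].
- move=> Z zZ; have [X [f Ef]] := HE0 Z zZ; exists X, f; split=> //.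
  apply: (conf_of_ker HF'kc HF'iso); first exact: (HFkc _ _ _ _ _ (HL _ _ _ _ _ Ef)).1.
  by rewrite Fmap_id; apply: HF'0; apply: Fmap_zero.
- move=> X Y Z f g [K1 [k1 [E1 F1]]] [K2 [k2 [E2 F2]]].
  have dEf : deflation E f by exists K1, k1.
  have dEg : deflation E g by exists K2, k2.
  have [K [k Ek]] := HE1 _ _ _ f g dEf dEg.
  exists K, k; split=> //.
  apply: (conf_of_ker HF'kc HF'iso); first exact: (HFkc _ _ _ _ _ (HL _ _ _ _ _ Ek)).1.
  rewrite Fmap_comp; apply: HF'1; [exists (L K1), (Fmap L k1) | exists (L K2), (Fmap L k2)] => //.
- move=> X Y X' f h [Z [g [Efg F'fg]]].
  have If : inflation E f by exists Z, g.
  have [P [a [b [po [Q [c Eac]]]]]] := HE2 _ _ _ f h If.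
  exists P, a, b; split=> //; exists Q, c; split=> //.
  apply: (conf_of_coker HF'kc HF'iso); first exact: (HFkc _ _ _ _ _ (HL _ _ _ _ _ Eac)).2.
  have [S [i1 [i2 [p1 [p2 Hb]]]]] := HAadd.2 Y X'.
  have Ec := pushout_conf HAadd HE Hb If po.
  have Fc := HL _ _ _ _ _ Ec.
  rewrite FmapB !Fmap_add !Fmap_comp in Fc.
  have poL : is_pushout (Fmap L f) (Fmap L h) (Fmap L a) (Fmap L b).
    apply: (coker_po (Fmap_bp L Hb)); first by rewrite -!Fmap_comp po.1.
    exact: (HFkc _ _ _ _ _ Fc).2.
  apply: (pushout_infl HF'iso HF'2 _ poL).
  by exists (L Z), (Fmap L g).
Qed.

Definition opC (C : PreAddCat) : PreAddCat.
Proof.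
refine (@Build_PreAddCat (Ob C) (fun X Y => @Mor C Y X) (fun X => @idm C X)
  (fun X Y Z f g => @Defs.comp C Z Y X g f) _ _ _ _ _).
- by move=> X Y Z W f g h; rewrite Defs.compA.
- by move=> X Y f; rewrite compm1.
- by move=> X Y f; rewrite comp1m.
- by move=> X Y Z f f' g; rewrite compDr.
- by move=> X Y Z f g g'; rewrite compDl.
Defined.

Definition opE (C : PreAddCat) (E : SeqClass C) : SeqClass (opC C) :=
  fun X Y Z f g => E Z Y X g f.
Arguments opE [C] E _ _ _ _ _.

Definition opF (A B : PreAddCat) (L : AddFunctor A B) : AddFunctor (opC A) (opC B).
Proof.
refine (@Build_AddFunctor (opC A) (opC B) (Fob L) (fun X Y f => @Fmap A B L Y X f) _ _ _).
- by move=> X; rewrite /= Fmap_id.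
- by move=> X Y Z f g; rewrite /= Fmap_comp.
- by move=> X Y f f'; rewrite /= Fmap_add.
Defined.

Lemma zero_op (C : PreAddCat) (Z : C) : is_zero_object Z -> is_zero_object (C := opC C) Z.
Proof. by case=> z1 z2; split; [exact: z2 | exact: z1]. Qed.

Lemma iso_op (C : PreAddCat) (X Y : C) (u : Mor X Y) :
  is_iso (C := opC C) (X := Y) (Y := X) u -> is_iso u.
Proof. by case=> v [e1 e2]; exists v; split; [exact: e2 | exact: e1]. Qed.

Lemma op_additive (C : PreAddCat) : is_additive C -> is_additive (opC C).
Proof.
case=> [[Z zZ] Hb]; split; first by exists Z; apply: zero_op.
move=> X Y; have [S [i1 [i2 [p1 [p2 [e1 e2 e3 e4 e5]]]]]] := Hb X Y.
exists S, p1, p2, i1, i2; split; [exact: e1|exact: e2|exact: e4|exact: e3|exact: e5].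
Qed.

Lemma iso_closed_rev (C : PreAddCat) (E : SeqClass C) : iso_closed E ->
  forall X Y Z (f : Mor X Y) (g : Mor Y Z) X' Y' Z' (f' : Mor X' Y')
    (g' : Mor Y' Z') (u : Mor X' X) (v : Mor Y' Y) (w : Mor Z' Z),
  is_iso u -> is_iso v -> is_iso w ->
  f' ;; v = u ;; f -> g' ;; w = v ;; g -> E X Y Z f g -> E X' Y' Z' f' g'.
Proof.
move=> Hiso X Y Z f g X' Y' Z' f' g' u v w [u' [eu1 eu2]] [v' [ev1 ev2]] [w' [ew1 ew2]] ef eg Ef.
apply: (Hiso _ _ _ _ _ _ _ _ _ _ u' v' w' _ _ _ _ _ Ef).
- by exists u.
- by exists v.
- by exists w.
- symmetry.
  by rewrite -[f']compm1 -ev1 -[f' ;; (v ;; v')]Defs.compA ef -!Defs.compA eu2 comp1m.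
- symmetry.
  by rewrite -[g']compm1 -ew1 -[g' ;; (w ;; w')]Defs.compA eg -!Defs.compA ev2 comp1m.
Qed.

Lemma op_exact_structure (C : PreAddCat) (E : SeqClass C) :
  is_exact_structure E -> is_exact_structure (opE E).
Proof.
case=> Hkc Hiso [HE0 HE0op] [HE1 HE1op] [HE2 HE2op]; split.
- move=> X Y Z f g Ef; have [k c] := Hkc _ _ _ _ _ Ef; split; [exact: c|exact: k].
- move=> X Y Z f g X' Y' Z' f' g' u v w iu iv iw e1 e2 Ef.
  apply: (iso_closed_rev Hiso (u := w) (v := v) (w := u) _ _ _ _ _ Ef).
  + exact: iso_op iw.
  + exact: iso_op iv.
  + exact: iso_op iu.
  + by symmetry; exact: e2.
  + by symmetry; exact: e1.
- split.
  + move=> Z zZ; apply: HE0op; case: zZ => z1 z2; split; [exact: z2|exact: z1].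
  + move=> Z zZ; apply: HE0; case: zZ => z1 z2; split; [exact: z2|exact: z1].
- split.
  + move=> X Y Z f g df dg; exact: (HE1op _ _ _ g f dg df).
  + move=> X Y Z f g df dg; exact: (HE1 _ _ _ g f dg df).
- split.
  + move=> X Y X' f h If; have [P [a [b [pb Db]]]] := HE2op _ _ _ f h If.
    by exists P, b, a; split; [exact: pb|exact: Db].
  + move=> Y Z Z' g h Dg; have [P [a [b [po Ia]]]] := HE2 _ _ _ g h Dg.
    by exists P, b, a; split; [exact: po|exact: Ia].
Qed.

Lemma op_exact_cat (C : PreAddCat) (E : SeqClass C) :
  is_exact_category E -> is_exact_category (opE E).
Proof. by case=> H1 H2; split; [apply: op_additive | apply: op_exact_structure]. Qed.

Theorem mainTheorem1 (A B : PreAddCat) (E : SeqClass A) (F F' : SeqClass B)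
    (L : AddFunctor A B) :
  is_exact_category E ->
  is_exact_category F ->
  is_exact_functor E F L ->
  (forall X Y Z (f : Mor X Y) (g : Mor Y Z), F' X Y Z f g -> F X Y Z f g) ->
  is_exact_category F' ->
  is_exact_category (preimage_class E F' L).
Proof.
move=> HE HF HL Hsub HF'.
have [h0 [h1 h2]] := half HE HF HL Hsub HF'.
have HLo : is_exact_functor (opE E) (opE F) (opF L).
  by move=> X Y Z f g Ef; exact: (HL _ _ _ _ _ Ef).
have Hsubo : forall (X Y Z : opC B) (f : Mor X Y) (g : Mor Y Z),
    opE F' X Y Z f g -> opE F X Y Z f g.
  by move=> X Y Z f g; apply: Hsub.
have [o0 [o1 o2]] := half (op_exact_cat HE) (op_exact_cat HF) HLo Hsubo (op_exact_cat HF').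
case: HE => HAadd HE'; case: HE' => Hkc Hiso _ _ _.
case: HF' => _ HF'x; case: HF'x => _ HF'iso _ _ _.
split; first exact: HAadd.
split.
- by move=> X Y Z f g [Ef _]; exact: Hkc.
- move=> X Y Z f g X' Y' Z' f' g' u v w iu iv iw e1 e2 [Ef F'f]; split.
    exact: (Hiso _ _ _ _ _ _ _ _ _ _ u v w iu iv iw e1 e2 Ef).
  apply: (HF'iso _ _ _ _ _ _ _ _ _ _ (Fmap L u) (Fmap L v) (Fmap L w) _ _ _ _ _ F'f).
  + exact: Fmap_iso.
  + exact: Fmap_iso.
  + exact: Fmap_iso.
  + by rewrite -!Fmap_comp e1.
  + by rewrite -!Fmap_comp e2.
- split; first exact: h0.
  move=> Z zZ; exact: (o0 Z (zero_op zZ)).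
- split; first exact: h1.
  move=> X Y Z f g If Ig; exact: (o1 _ _ _ g f Ig If).
- split; first exact: h2.
  move=> Y Z Z' g h Dg; have [P [a [b [po Ia]]]] := o2 _ _ _ g h Dg.
  by exists P, b, a; split; [exact: po|exact: Ia].
Qed.
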